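(* Let $S'$ be a HeyVL program, $X,Y$ expectations, and $S=\mathtt{assume}\ X;\ S';\ \mathtt{assert}\ Y$. Consider slices with respect to pre $\infty$ and post $\infty$. (1) If $\mathtt{assume}\ X;\ S'$ is an error-witnessing slice of $S$ w.r.t. $(\infty,\infty)$, then $\not\models\{X\}\,S'\,\{Z\}$ for every expectation $Z$. (2) If $S';\ \mathtt{assert}\ Y$ is a verification-witnessing slice of $S$ w.r.t. $(\infty,\infty)$ that verifies (i.e. $\models\{\infty\}\,S';\mathtt{assert}\ Y\,\{\infty\}$), then $\models\{Z\}\,S'\,\{Y\}$ for every expectation $Z$.
   Context: Expectations are functions from program states to $[0,\infty]$, ordered pointwise by $\preceq$. For HeyVL statements, $\mathrm{vp}$ denotes the verification pre-expectation transformer; it is monotone and satisfies $\mathrm{vp}[S_1;S_2](X)=\mathrm{vp}[S_1](\mathrm{vp}[S_2](X))$, $\mathrm{vp}[\mathtt{assert}\ Y](X)=\min(Y,X)$ pointwise, and $\mathrm{vp}[\mathtt{assume}\ Y](X)$ equals $\infty$ at $\sigma$ where $Y(\sigma)\le X(\sigma)$ and $X(\sigma)$ elsewhere. Write $\sigma\models\{X\}S\{Y\}$ iff $X(\sigma)\le\mathrm{vp}[S](Y)(\sigma)$, and $\models\{X\}S\{Y\}$ iff this holds for all states. A subprogram $P$ of $S$ is an error-witnessing slice w.r.t. $(A,B)$ if $\not\models\{A\}P\{B\}$ and every state $\sigma'$ with $\sigma'\not\models\{A\}P\{B\}$ also has $\sigma'\not\models\{A\}S\{B\}$; it is a verification-witnessing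 slice w.r.t. $(A,B)$ if $\models\{A\}P\{B\}$ implies $\models\{A\}S\{B\}$. *)

(* Defs.v *)
From HB Require Import structures.
From mathcomp Require Import all_boot all_order all_algebra.
From mathcomp Require Import all_classical all_reals.
From mathcomp Require Import ereal.

Set Implicit Arguments.
Unset Strict Implicit.
Unset Printing Implicit Defensive.
Import Order.TTheory GRing.Theory Num.Theory.

Local Open Scope ring_scope.
Local Open Scope ereal_scope.

Definition expectation (R : realType) (St : Type) := St -> \bar R.

Definition is_expectation (R : realType) (St : Type) (X : expectation R St) :=
  forall s, 0 <= X s.

Definition einfty (R : realType) (St : Type) : expectation R St := fun _ => +oo.
Arguments einfty : clear implicits.

Inductive heyvl (R : realType) (St : Type) : Type :=
| HSkip
| HAssign (f : St -> St)
| HRAssign (mu : seq (R * (St -> St)))            (* x :~ mu, finite distribution *)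
| HReward (t : expectation R St)
| HSeq (S1 S2 : heyvl R St)
| HIte (b : St -> bool) (S1 S2 : heyvl R St)
| HDemonic (S1 S2 : heyvl R St)
| HAngelic (S1 S2 : heyvl R St)
| HAssert (Y : expectation R St)
| HAssume (Y : expectation R St)
| HCoassert (Y : expectation R St)
| HCoassume (Y : expectation R St)
| HHavoc (V : Type) (upd : V -> St -> St)
| HCohavoc (V : Type) (upd : V -> St -> St)
| HValidate
| HCovalidate.

Arguments HSkip {R St}.
Arguments HValidate {R St}.
Arguments HCovalidate {R St}.

Fixpoint wf_heyvl (R : realType) (St : Type) (S : heyvl R St) : Prop :=
  match S with
  | HSkip | HAssign _ | HHavoc _ _ | HCohavoc _ _ | HValidate | HCovalidate => True
  | HRAssign mu => (forall pf, pf \in [seq p.1 | p <- mu] -> (0 <= pf)%R)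
                   /\ (\sum_(p <- mu) p.1 = 1)%R
  | HReward t => is_expectation t
  | HSeq S1 S2 | HIte _ S1 S2 | HDemonic S1 S2 | HAngelic S1 S2 =>
      wf_heyvl S1 /\ wf_heyvl S2
  | HAssert Y | HAssume Y | HCoassert Y | HCoassume Y => is_expectation Y
  end.

Fixpoint vp (R : realType) (St : Type) (S : heyvl R St)
  : expectation R St -> expectation R St :=
  match S with
  | HSkip => fun X => X
  | HAssign f => fun X s => X (f s)
  | HRAssign mu => fun X s => \sum_(p <- mu) ((p.1)%:E * X (p.2 s))
  | HReward t => fun X s => t s + X s
  | HSeq S1 S2 => fun X => vp S1 (vp S2 X)
  | HIte b S1 S2 => fun X s => if b s then vp S1 X s else vp S2 X s
  | HDemonic S1 S2 => fun X s => mine (vp S1 X s) (vp S2 X s)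
  | HAngelic S1 S2 => fun X s => maxe (vp S1 X s) (vp S2 X s)
  | HAssert Y => fun X s => mine (Y s) (X s)
  | HAssume Y => fun X s => if Y s <= X s then +oo else X s
  | HCoassert Y => fun X s => maxe (Y s) (X s)
  | HCoassume Y => fun X s => if X s <= Y s then 0 else X s
  | HHavoc V upd => fun X s => ereal_inf (range (fun v : V => X (upd v s)))
  | HCohavoc V upd => fun X s => ereal_sup (range (fun v : V => X (upd v s)))
  | HValidate => fun X s => if X s == +oo then +oo else 0
  | HCovalidate => fun X s => if X s == 0 then 0 else +oo
  end.

Definition valid_at (R : realType) (St : Type) (X : expectation R St)
  (S : heyvl R St) (Y : expectation R St) (s : St) : Prop :=
  X s <= vp S Y s.

Definition valid (R : realType) (St : Type) (X : expectation R St)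
  (S : heyvl R St) (Y : expectation R St) : Prop :=
  forall s, valid_at X S Y s.

Definition error_witnessing (R : realType) (St : Type) (S P : heyvl R St)
  (A B : expectation R St) : Prop :=
  ~ valid A P B /\ (forall s, ~ valid_at A P B s -> ~ valid_at A S B s).

Definition verification_witnessing (R : realType) (St : Type) (S P : heyvl R St)
  (A B : expectation R St) : Prop :=
  valid A P B -> valid A S B.

(* Main.v *)
Require Import Defs.
From mathcomp Require Import all_boot all_order all_algebra.
From mathcomp Require Import all_classical all_reals ereal.
Import Order.TTheory GRing.Theory Num.Theory.
Local Open Scope ring_scope.
Local Open Scope ereal_scope.

Section Aux.
Variable R : realType.

Definition rel (a1 a2 : \bar R) :=
  a1 <= a2 /\ ((a1 = -oo /\ a2 = -oo) \/ 0 <= a1).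

Lemma rel_refl a : 0 <= a -> rel a a.
Proof. by move=> h; split; [exact: le_refl| right]. Qed.

Lemma rel_add a1 a2 b1 b2 : rel a1 a2 -> rel b1 b2 -> rel (a1 + b1) (a2 + b2).
Proof.
move=> [ha [[-> ->]|ha0]] [hb [[-> ->]|hb0]].
- by rewrite !addNye; split => //; left.
- by rewrite !addNye; split => //; left.
- by rewrite !addeNy; split => //; left.
- by split; [exact: leeD | right; exact: adde_ge0].
Qed.

Lemma rel_mul (r : R) a1 a2 : (0 <= r)%R -> rel a1 a2 -> rel (r%:E * a1) (r%:E * a2).
Proof.
move=> hr [ha [[-> ->]|ha0]].
- have [->|rpos] := eqVneq r 0%R; first by rewrite !mul0e; apply: rel_refl.
  have hr' : (0 < r)%R by rewrite lt_neqAle eq_sym rpos hr.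
  by rewrite mulrNy gtr0_sg // mul1e; split => //; left.
- split; first exact: lee_wpmul2l.
  by right; apply: mule_ge0.
Qed.

Lemma rel_min a1 a2 b1 b2 : rel a1 a2 -> rel b1 b2 -> rel (mine a1 b1) (mine a2 b2).
Proof.
move=> [ha [[-> ->]|ha0]].
  by move=> _; rewrite !minNye; split => //; left.
move=> [hb [[-> ->]|hb0]].
  by rewrite !mineNy; split => //; left.
split; last by right; rewrite le_min ha0 hb0.
by rewrite le_min !ge_min ha hb !orbT.
Qed.

Lemma rel_max a1 a2 b1 b2 : rel a1 a2 -> rel b1 b2 -> rel (maxe a1 b1) (maxe a2 b2).
Proof.
move=> [ha hA] [hb hB].
have mono : maxe a1 b1 <= maxe a2 b2.
  by rewrite ge_max !le_max ha hb orbT.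
case: hA mono => [[-> ->]|ha0] mono.
  case: hB mono => [[-> ->]|hb0] mono; first by rewrite !maxNye; split => //; left.
  by split; [exact: mono| right; rewrite le_max hb0 orbT].
by split; [exact: mono| right; rewrite le_max ha0].
Qed.

Definition frel (St : Type) (A1 A2 : expectation R St) := forall s, rel (A1 s) (A2 s).
Arguments frel {St}.

Lemma rel_sum (St : Type) (mu : seq (R * (St -> St))) (A1 A2 : expectation R St) (s : St) :
  (forall pf, pf \in [seq p.1 | p <- mu] -> (0 <= pf)%R) -> frel A1 A2 ->
  rel (\sum_(p <- mu) ((p.1)%:E * A1 (p.2 s))) (\sum_(p <- mu) ((p.1)%:E * A2 (p.2 s))).
Proof.
move=> hw hA; elim: mu hw => [|p mu IH] hw.
  by rewrite !big_nil; apply: rel_refl.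
rewrite !big_cons; apply: rel_add.
  by apply: rel_mul; [apply: hw; rewrite inE eqxx | exact: hA].
by apply: IH => pf hpf; apply: hw; rewrite inE hpf orbT.
Qed.

Lemma vp_mono (St : Type) (S : heyvl R St) : wf_heyvl S ->
  forall A1 A2, frel A1 A2 -> frel (vp S A1) (vp S A2).
Proof.
elim: S => /=.
- by [].
- by move=> f _ A1 A2 h s; apply: h.
- by move=> mu [hw _] A1 A2 h s; apply: rel_sum.
- by move=> t ht A1 A2 h s; apply: rel_add; [apply: rel_refl|].
- by move=> S1 IH1 S2 IH2 [w1 w2] A1 A2 h; apply: IH1 => //; apply: IH2.
- by move=> b S1 IH1 S2 IH2 [w1 w2] A1 A2 h s; case: (b s); [apply: IH1| apply: IH2].
- by move=> S1 IH1 S2 IH2 [w1 w2] A1 A2 h s; apply: rel_min; [apply: IH1|apply: IH2].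
- by move=> S1 IH1 S2 IH2 [w1 w2] A1 A2 h s; apply: rel_max; [apply: IH1|apply: IH2].
- by move=> Y hY A1 A2 h s; apply: rel_min; [apply: rel_refl|].
- move=> Y hY A1 A2 h s; have [le12 h0] := h s.
  case: ifP => e1; case: ifP => e2.
  + by apply: rel_refl; rewrite leey.
  + by rewrite (le_trans e1 le12) in e2.
  + split; first by rewrite leey.
    case: h0 => [[e3 e4]|]; last by right.
    by move: e2; rewrite e4 leeNy_eq => /eqP e5; move: (hY s); rewrite e5.
  + by [].
- by move=> Y hY A1 A2 h s; apply: rel_max; [apply: rel_refl|].
- move=> Y hY A1 A2 h s; have [le12 h0] := h s.
  case: ifP => e1; case: ifP => e2.
  + by apply: rel_refl.
  + split; last by right.
    move/negbT: e2; rewrite -ltNge => e2.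
    exact: le_trans (hY s) (ltW e2).
  + by rewrite (le_trans le12 e2) in e1.
  + by [].
- move=> V upd _ A1 A2 h s; split.
    apply: le_ereal_inf_tmp => _ [v _ <-].
    apply: le_trans (proj1 (h (upd v s))).
    by apply: ereal_inf_lbound; exists v.
  have [[v hv]|nv] := pselect (exists v, A1 (upd v s) = -oo).
    have [_ [[_ e2]|h0]] := h (upd v s).
      left; split; apply/eqP; rewrite -leeNy_eq.
        by rewrite -hv; apply: ereal_inf_lbound; exists v.
      by rewrite -e2; apply: ereal_inf_lbound; exists v.
    by move: h0; rewrite hv.
  right; apply: le_ereal_inf_tmp => _ [v _ <-].
  have [_ [[e1 _]|//]] := h (upd v s).
  by exfalso; apply: nv; exists v.
- move=> V upd _ A1 A2 h s; split.
    apply: ge_ereal_sup => _ [v _ <-].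
    apply: le_trans (proj1 (h (upd v s))) _.
    by apply: ereal_sup_ubound; exists v.
  have [[v hv]|nv] := pselect (exists v, 0 <= A1 (upd v s)).
    right; apply: le_trans hv _.
    by apply: ereal_sup_ubound; exists v.
  left; split; apply/eqP; rewrite -leeNy_eq; apply: ge_ereal_sup => _ [v _ <-].
    have [_ [[e1 _]|h0]] := h (upd v s); first by rewrite e1.
    by exfalso; apply: nv; exists v.
  have [_ [[_ e2]|h0]] := h (upd v s); first by rewrite e2.
  by exfalso; apply: nv; exists v.
- move=> _ A1 A2 h s; have [le12 h0] := h s.
  case: eqP => e1.
    by move: le12; rewrite e1 leye_eq => /eqP ->; rewrite eqxx; apply: rel_refl.
  by split; [case: eqP => _ //; rewrite leey | right].
- move=> _ A1 A2 h s; have [le12 h0] := h s.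
  case: eqP => e1.
    by split; [case: eqP => _ //; rewrite leey | right].
  case: eqP => e2; last by apply: rel_refl.
  exfalso; case: h0 => [[_ e3]|h0]; first by rewrite e3 in e2.
  by apply: e1; apply/eqP; rewrite eq_le h0 -e2 le12.
Qed.

End Aux.

Theorem theorem4 (R : realType) (St : Type) (S' : heyvl R St)
  (X Y : expectation R St) :
  wf_heyvl S' -> is_expectation X -> is_expectation Y ->
  let S := HSeq (HAssume X) (HSeq S' (HAssert Y)) in
  (error_witnessing S (HSeq (HAssume X) S') (einfty R St) (einfty R St) ->
     forall Z : expectation R St, is_expectation Z -> ~ valid X S' Z)
  /\
  (verification_witnessing S (HSeq S' (HAssert Y)) (einfty R St) (einfty R St) ->
     valid (einfty R St) (HSeq S' (HAssert Y)) (einfty R St) ->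
     forall Z : expectation R St, is_expectation Z -> valid Z S' Y).
Proof.
move=> wfS hX hY S; split.
- move=> [hnv _] Z hZ hv; apply: hnv => s.
  rewrite /valid_at /=.
  case: ifP => h; first by rewrite /einfty.
  have hm : @frel R St Z (einfty R St) by move=> x; split; [rewrite /einfty leey | right].
  have [hle _] := @vp_mono R St S' wfS _ _ hm s.
  by rewrite (le_trans (hv s) hle) in h.
- move=> _ hv Z hZ s; have := hv s; rewrite /valid_at /=.
  have -> : (fun x => mine (Y x) (einfty R St x)) = Y.
    by apply/funext => x; rewrite /einfty; apply/min_idPl; exact: leey.
  by rewrite /einfty leye_eq => /eqP ->; rewrite leey.
Qed.
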